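(* Let $\alpha\in(0,1)$, $\mu\in\mathbb{R}$, $\sigma\ge 0$, and let $\mathcal{P}$ be the set of all probability distributions $\mathbb{P}$ on $\mathbb{R}$ (with finite second moment) under which a real random variable $\xi$ has mean $\mathbb{E}_{\mathbb{P}}[\xi]=\mu$ and variance $\mathbb{D}_{\mathbb{P}}[\xi]=\sigma^2$. For $\Theta\in\mathbb{R}$ and $\theta^0\in\mathbb{R}$, consider the affine loss $\phi(\xi)=\Theta\xi+\theta^0$. Then the worst-case conditional value-at-risk $$\sup_{\mathbb{P}\in\mathcal{P}}\ \mathbb{P}\text{-}\mathrm{CVaR}_\alpha\big(\phi(\xi)\big)$$ equals the optimal value of the second-order cone program $$\inf_{\beta,e,q,z,s\in\mathbb{R}}\ \beta+\frac{1}{1-\alpha}(e+s)$$ subject to $$e-\theta^0+\beta+q-\Theta\mu-z>0,\qquad e\ge 0,\qquad z>0,\qquad \left\|\begin{pmatrix} q\\ \Theta\sigma\\ z-s\end{pmatrix}\right\|_2\le z+s.$$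
   Context: For a distribution $\mathbb{P}$ and an integrable random variable $X$, the conditional value-at-risk at level $\alpha\in(0,1)$ is $\mathbb{P}\text{-}\mathrm{CVaR}_\alpha(X)=\inf_{\beta\in\mathbb{R}}\big\{\beta+\frac{1}{1-\alpha}\mathbb{E}_{\mathbb{P}}[(X-\beta)^+]\big\}$, where $(x)^+=\max\{x,0\}$. $\|\cdot\|_2$ denotes the Euclidean norm on $\mathbb{R}^3$; $\beta,e,q,z,s$ are auxiliary scalar decision variables. *)

(* Defs.v *)
From mathcomp Require Import all_boot all_order all_algebra.
From mathcomp Require Import all_classical all_reals all_analysis.
Set Implicit Arguments. Unset Strict Implicit. Unset Printing Implicit Defensive.
Import Order.TTheory GRing.Theory Num.Theory.
Local Open Scope classical_set_scope.
Local Open Scope ring_scope.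

Definition pospart (R : realType) (x : R) : R := Num.max x 0.

Definition CVaR (R : realType) (P : probability R R) (alpha : R) (X : R -> R)
  : \bar R :=
  ereal_inf [set ((beta%:E + ((1 - alpha)^-1)%:E *
                   \int[P]_x (pospart (X x - beta))%:E))%E | beta in [set: R]].

Definition moment_set (R : realType) (mu sigma : R) : set (probability R R) :=
  [set P : probability R R |
     P.-integrable [set: R] (fun x => (x ^+ 2)%:E) /\
     (\int[P]_x x%:E = mu%:E)%E /\
     (\int[P]_x ((x - mu) ^+ 2)%:E = (sigma ^+ 2)%:E)%E].

Definition worst_case_CVaR (R : realType) (alpha mu sigma Theta theta0 : R)
  : \bar R :=
  ereal_sup [set CVaR P alpha (fun xi => Theta * xi + theta0)
            | P in moment_set mu sigma].

Definition socp_feasible (R : realType) (mu sigma Theta theta0 : R)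
  (beta e q z s : R) : Prop :=
  [/\ 0 < e - theta0 + beta + q - Theta * mu - z,
      0 <= e,
      0 < z &
      Num.sqrt (q ^+ 2 + (Theta * sigma) ^+ 2 + (z - s) ^+ 2) <= z + s].

Definition socp_value (R : realType) (alpha mu sigma Theta theta0 : R)
  : \bar R :=
  ereal_inf [set r : \bar R | exists beta e q z s : R,
               socp_feasible mu sigma Theta theta0 beta e q z s /\
               r = (beta + (1 - alpha)^-1 * (e + s))%:E].

(* Main.v *)
Require Import Defs.
From HB Require Import structures.
From mathcomp Require Import all_boot all_order all_algebra.
From mathcomp Require Import all_classical all_reals all_analysis.
From mathcomp Require Import measurable_realfun ring lra.
Import Order.TTheory GRing.Theory Num.Theory.
Local Open Scope ring_scope.
Local Open Scope classical_set_scope.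
Set Implicit Arguments. Unset Strict Implicit.

Ltac mtac := rewrite /pospart; repeat first [ apply: measurable_funD | apply: measurable_funB | apply: measurable_funM | apply: measurable_maxr | apply: measurable_funX | exact: measurable_cst | exact: measurable_id ].
Definition tp (R : realType) (lo hi : R) (b : bool) : R := if b then hi else lo.
Lemma mtp (R : realType) (lo hi : R) : measurable_fun setT (tp lo hi).
Proof. move=> _ Y _; exact: I. Qed.
HB.instance Definition _ (R : realType) (lo hi : R) :=
  isMeasurableFun.Build _ _ _ _ (tp lo hi) (mtp lo hi).

Lemma maxsub (R : realType) (a : R) : Num.max a 0 - Num.max (- a) 0 = a.
Proof. rewrite !maxr_absE !subr0 normrN; lra. Qed.

Lemma int_tp (R : realType) (p lo hi : R) (f : R -> R) : 0 <= p <= 1 ->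
  measurable_fun setT f ->
  (\int[distribution (bernoulli_prob p) (tp lo hi)]_x (f x)%:E
   = (p * f hi + (1 - p) * f lo)%:E)%E.
Proof.
move=> p01 mf.
have mfe : measurable_fun [set: R] (fun x : R => (f x)%:E) by exact/measurable_EFinP.
rewrite integralE /distribution.
rewrite !ge0_integral_pushforward //; last 2 first.
- exact: measurable_funeneg.
- exact: measurable_funepos.
rewrite preimage_setT !integral_bernoulli_prob //; last 2 first.
- by move=> ?; exact: funeneg_ge0.
- by move=> ?; exact: funepos_ge0.
rewrite /= !funeposE !funenegE /=.
have E0 : (0%R : \bar R) = 0%:E by [].
rewrite !E0 -!EFin_max -!EFinM -!EFinD -?EFinB.
congr EFin; rewrite /unstable.onem.
transitivity (p * (Num.max (f hi) 0 - Num.max (- f hi) 0) +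
  (1 - p) * (Num.max (f lo) 0 - Num.max (- f lo) 0)); first ring.
by rewrite !maxsub.
Qed.

Lemma lower_cvar (R : realType) (alpha mu sigma Theta theta0 c sg : R) :
  0 < alpha < 1 -> 0 < c -> Theta * sg = `|Theta| ->
  ((Theta * mu + theta0 + `|Theta| * sigma * alpha / c)%:E <=
   CVaR (distribution (bernoulli_prob (1 - alpha)%R)
          (tp (mu - sg * sigma * (1 - alpha) / c)%R (mu + sg * sigma * alpha / c)%R))
        alpha (fun xi => (Theta * xi + theta0)%R))%E.
Proof.
move=> /andP[a0 a1] c0 hsg.
apply/ereal_infP => _ [b _ <-].
rewrite int_tp; last 2 first.
- by apply/andP; split; lra.
- by mtac.
rewrite -EFinM -EFinD lee_fin.
set X := pospart _. set Y := pospart _.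
have hX : Theta * (mu + sg * sigma * alpha / c) + theta0 - b <= X.
  by rewrite /X /pospart le_max lexx.
have hY : 0 <= Y by rewrite /Y /pospart le_max lexx orbT.
have cn : c != 0 by rewrite gt_eqF.
have an : 1 - alpha != 0 by rewrite subr_eq0 gt_eqF.
have -> : (1 - alpha)^-1 * ((1 - alpha) * X + (1 - (1 - alpha)) * Y) =
   X + alpha / (1 - alpha) * Y by field.
have E : Theta * (mu + sg * sigma * alpha / c) =
   Theta * mu + (Theta * sg) * sigma * alpha / c by field.
rewrite E hsg in hX.
have : 0 <= alpha / (1 - alpha) * Y.
  by apply: mulr_ge0 => //; apply: divr_ge0; lra.
lra.
Qed.

Lemma cst_int (R : realType) (P : probability R R) (k : R) : (\int[P]_x k%:E = k%:E)%E.
Proof. rewrite integral_cst //. rewrite -[RHS]mule1; apply: congr1; exact: probability_setT. Qed.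

Lemma mom (R : realType) (alpha mu sigma c sg : R) :
  0 < alpha < 1 -> 0 < c -> c ^+ 2 = alpha * (1 - alpha) -> sg ^+ 2 = 1 ->
  moment_set mu sigma (distribution (bernoulli_prob (1 - alpha))
          (tp (mu - sg * sigma * (1 - alpha) / c) (mu + sg * sigma * alpha / c))).
Proof.
move=> /andP[a0 a1] c0 hc2 hsg2.
have p01 : 0 <= 1 - alpha <= 1 by apply/andP; split; lra.
have cn : c != 0 by rewrite gt_eqF.
split; [|split].
- apply/integrableP; split; first by apply/measurable_EFinP; mtac.
  under eq_integral do rewrite abse_EFin (ger0_norm (sqr_ge0 _)).
  by rewrite int_tp //; first [exact: ltry | mtac].
- rewrite (@int_tp R (1 - alpha) _ _ (fun x => x) p01 (@measurable_id _ _ _)).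
  by congr EFin; field.
- have mf : measurable_fun setT (fun x : R => (x - mu) ^+ 2) by mtac.
  rewrite (@int_tp R (1 - alpha) _ _ _ p01 mf).
  congr EFin.
  have -> : (1 - alpha) * (mu + sg * sigma * alpha / c - mu) ^+ 2 +
     (1 - (1 - alpha)) * (mu - sg * sigma * (1 - alpha) / c - mu) ^+ 2 =
     sg ^+ 2 * sigma ^+ 2 * (alpha * (1 - alpha)) / c ^+ 2 by field.
  by rewrite hsg2 -hc2 mul1r; field.
Qed.

Lemma socp_le (R : realType) (alpha mu sigma Theta theta0 c : R) :
  0 < alpha < 1 -> 0 <= sigma -> 0 < c -> c ^+ 2 = alpha * (1 - alpha) ->
  (socp_value alpha mu sigma Theta theta0 <=
   (Theta * mu + theta0 + `|Theta| * sigma * alpha / c)%:E)%E.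
Proof.
move=> /andP[a0 a1] s0 c0 hc2.
apply/lee_addgt0Pr => eps eps0.
have cn : c != 0 by rewrite gt_eqF.
have an : 1 - alpha != 0 by rewrite subr_eq0 gt_eqF.
pose tau := `|Theta| * sigma.
have tau0 : 0 <= tau by rewrite /tau mulr_ge0.
pose r := tau / (2 * c).
have r0 : 0 <= r by rewrite /r divr_ge0 //; lra.
pose d := tau * (1 - 2 * alpha) / (2 * c).
pose beta := Theta * mu + theta0 - d.
pose delta := eps * (1 - alpha) / 2.
have de0 : 0 < delta by rewrite /delta; apply: divr_gt0 => //; apply: mulr_gt0 => //; lra.
pose z := r + delta.
have z0 : 0 < z by rewrite /z; lra.
have zn : z != 0 by rewrite gt_eqF.
pose q := d + z.
pose s := ((d + z) ^+ 2 + tau ^+ 2) / (4 * z).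
have sge0 : 0 <= s by rewrite /s divr_ge0 //; [ have := sqr_ge0 (d + z); have := sqr_ge0 tau; lra | lra].
have Kt : tau ^+ 2 = r ^+ 2 - d ^+ 2.
  have -> : r ^+ 2 - d ^+ 2 = tau ^+ 2 * (alpha * (1 - alpha)) / c ^+ 2.
    by rewrite /r /d; field.
  by rewrite -hc2; field.
have K3 : - d + (d + r) / (2 * (1 - alpha)) = tau * alpha / c.
  by rewrite /d /r; field; rewrite ?cn ?an.
have K1 : s = (d + r) / 2 + delta ^+ 2 / (4 * z).
  by rewrite /s Kt /z; field.
apply: ge_ereal_inf.
exists ((beta + (1 - alpha)^-1 * (delta + s))%:E).
  exists beta, delta, q, z, s; split => //.
  split.
  - rewrite /beta /q; lra.
  - exact: ltW.
  - exact: z0.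
  - have -> : q ^+ 2 + (Theta * sigma) ^+ 2 + (z - s) ^+ 2 = (z + s) ^+ 2.
      have -> : (Theta * sigma) ^+ 2 = tau ^+ 2.
        by rewrite /tau exprMn -(real_normK (num_real Theta)) exprMn.
      by rewrite /q /s; field.
    by rewrite sqrtr_sqr ger0_norm //; lra.
rewrite -EFinD lee_fin.
have -> : beta + (1 - alpha)^-1 * (delta + s) =
   Theta * mu + theta0 + (- d + (d + r) / (2 * (1 - alpha))) +
   (delta + delta ^+ 2 / (4 * z)) / (1 - alpha).
  by rewrite K1 /beta; field; rewrite an zn.
rewrite K3 lerD2l.
rewrite ler_pdivrMr; last lra.
have : delta ^+ 2 / (4 * z) <= delta / 4.
  rewrite ler_pdivrMr; last lra.
  have : delta <= z by rewrite /z; lra.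
  rewrite expr2; nra.
  have hd : eps * (1 - alpha) = 2 * delta by rewrite /delta; field.
  rewrite hd; lra.
Qed.

Lemma upper (R : realType) (alpha mu sigma Theta theta0 beta e q z s : R)
  (P : probability R R) :
  0 < alpha < 1 -> moment_set mu sigma P ->
  socp_feasible mu sigma Theta theta0 beta e q z s ->
  (CVaR P alpha (fun xi => (Theta * xi + theta0)%R) <=
   (beta + (1 - alpha)^-1 * (e + s))%:E)%E.
Proof.
move=> /andP[a0 a1] [ix2 [m1 m2]] [h1 h2 h3 h4].
set B := Theta * q / (2 * z). set A := Theta ^+ 2 / (4 * z).
set C0 := e + q ^+ 2 / (4 * z) - B * mu.
have z0 : z != 0 by rewrite gt_eqF.
have pw : forall x, pospart (Theta * x + theta0 - beta) <= C0 + A * (x - mu) ^+ 2 + B * x.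
  move=> x; set w := Theta * x - Theta * mu + q.
  have -> : C0 + A * (x - mu) ^+ 2 + B * x = e + w ^+ 2 / (4 * z).
    by rewrite /C0 /A /B /w; field.
  have hw : w - z <= w ^+ 2 / (4 * z).
    have -> : w ^+ 2 / (4 * z) = (w - z) + (w - 2 * z) ^+ 2 / (4 * z) by field.
    rewrite lerDl; apply: divr_ge0; [exact: sqr_ge0 | lra].
  have hw0 : 0 <= w ^+ 2 / (4 * z) by apply: divr_ge0; [exact: sqr_ge0|lra].
  rewrite /pospart ge_max; apply/andP; split; [ | lra].
  rewrite /w in hw *; lra.
have mpp : measurable_fun setT (fun x : R => pospart (Theta * x + theta0 - beta)) by mtac.
have mg : measurable_fun setT (fun x : R => C0 + A * (x - mu) ^+ 2 + B * x) by mtac.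
have ix1 : P.-integrable setT (fun x : R => x%:E).
  apply: (le_integrable _ _ _ (integrableD measurableT ix2
     (finite_measure_integrable_cst P 1 measurableT))).
  - exact: measurableT.
  - by apply/measurable_EFinP; exact: measurable_id.
  move=> x _ /=; rewrite lee_fin.
  rewrite (@ger0_norm _ (x ^+ 2 + 1)); last by have := sqr_ge0 x; lra.
  have := real_normK (num_real x); have := normr_ge0 x; have := sqr_ge0 (`|x| - 1); nra.
have ixm : P.-integrable setT (fun x : R => ((x - mu) ^+ 2)%:E).
  apply/integrableP; split; first by apply/measurable_EFinP; mtac.
  under eq_integral do rewrite abse_EFin (ger0_norm (sqr_ge0 _)).
  by rewrite m2 ltry.
have Ig : (\int[P]_x (C0 + A * (x - mu) ^+ 2 + B * x)%:E =
          (C0 + A * sigma ^+ 2 + B * mu)%:E)%E.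
  under eq_integral do rewrite 2!EFinD (EFinM A) (EFinM B).
  rewrite integralD //; last 2 first.
  - apply: integrableD => //; first exact: finite_measure_integrable_cst.
    exact: integrableZl.
  - exact: integrableZl.
  rewrite integralD //; last 2 first.
  - exact: finite_measure_integrable_cst.
  - exact: integrableZl.
  by rewrite cst_int !integralZl // m1 m2 -!EFinM -!EFinD.
have hc : (CVaR P alpha (fun xi : R => (Theta * xi + theta0)%R) <=
    beta%:E + ((1 - alpha)^-1)%:E *
      \int[P]_x (pospart (Theta * x + theta0 - beta))%:E)%E.
  by apply: ereal_inf_lbound; exists beta.
apply: (le_trans hc); rewrite EFinD EFinM; apply: leeD2l.
apply: lee_wpmul2l; first by rewrite lee_fin invr_ge0; lra.
apply: (@le_trans _ _ (\int[P]_x (C0 + A * (x - mu) ^+ 2 + B * x)%:E)%E).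
  apply: ge0_le_integral => //.
- by move=> x _; rewrite lee_fin /pospart le_max lexx orbT.
- exact/measurable_EFinP.
- exact/measurable_EFinP.
- by move=> x _; rewrite lee_fin; exact: pw.
rewrite Ig lee_fin.
have Q0 : 0 <= q ^+ 2 + (Theta * sigma) ^+ 2 + (z - s) ^+ 2.
  by have := sqr_ge0 q; have := sqr_ge0 (Theta * sigma); have := sqr_ge0 (z - s); lra.
have hQ : q ^+ 2 + (Theta * sigma) ^+ 2 <= 4 * z * s.
  have := sqr_sqrtr Q0; have := sqrtr_ge0 (q ^+ 2 + (Theta * sigma) ^+ 2 + (z - s) ^+ 2).
  nra.
have -> : C0 + A * sigma ^+ 2 + B * mu = e + (q ^+ 2 + (Theta * sigma) ^+ 2) / (4 * z).
  by rewrite /C0 /A /B; field.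
rewrite lerD2l ler_pdivrMr; last lra.
nra.
Qed.

Theorem lemma1 (R : realType) (alpha mu sigma Theta theta0 : R) :
  0 < alpha < 1 -> 0 <= sigma ->
  worst_case_CVaR alpha mu sigma Theta theta0 =
  socp_value alpha mu sigma Theta theta0.
Proof.
move=> a01 s0; have /andP[a0 a1] := a01.
apply/eqP; rewrite eq_le; apply/andP; split.
  apply/ereal_supP => _ [P HP <-]; apply/ereal_infP => _ [b [e [q [z [s [hf ->]]]]]].
  exact: (upper a01 HP hf).
pose c := Num.sqrt (alpha * (1 - alpha)).
have ac0 : 0 < alpha * (1 - alpha) by apply: mulr_gt0; lra.
have c0 : 0 < c by rewrite /c sqrtr_gt0.
have hc2 : c ^+ 2 = alpha * (1 - alpha) by rewrite /c sqr_sqrtr // ltW.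
pose sg : R := if 0 <= Theta then 1 else -1.
have hsg : Theta * sg = `|Theta|.
  rewrite /sg; case: ifP => h; first by rewrite mulr1 ger0_norm.
  by rewrite mulrN1 ltr0_norm // ltNge h.
have hsg2 : sg ^+ 2 = 1 by rewrite /sg; case: ifP => _; rewrite ?sqrrN expr1n.
apply: (le_trans (socp_le mu Theta theta0 a01 s0 c0 hc2)).
apply: (le_trans (lower_cvar mu sigma theta0 a01 c0 hsg)).
apply: ereal_sup_ubound; exists (distribution (bernoulli_prob (1 - alpha))
          (tp (mu - sg * sigma * (1 - alpha) / c) (mu + sg * sigma * alpha / c))) => //.
exact: mom.
Qed.
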